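(* Let $f,g$ be smooth functions on an interval $I\subset\mathbb{R}$ with $\dot f^2+\dot g^2=1$ and $f$ nowhere zero, let $l=l(v)$, $v\in J$, be an arc-length parametrized curve $c$ on the unit sphere $S^2(1)\subset\mathbb{R}^3=\mathrm{span}\{e_1,e_2,e_3\}$ with spherical curvature $\kappa(v)$, and let $M^2: z(u,v)=f(u)\,l(v)+g(u)\,e_4$ (a meridian surface). Assume $M^2$ belongs to the general class, i.e. $\kappa_m(u)\kappa(v)\neq0$, where $\kappa_m=\dot f\ddot g-\dot g\ddot f$. Let $a\neq0$ be a constant. Then the invariant $k$ of $M^2$ is constant equal to $-a^2$ if and only if the curve $c$ is a circle on $S^2(1)$ with constant spherical curvature $\kappa\equiv b$ for some constant $b\neq0$, and $f$ satisfies the differential equation $$\ddot f(u)=\mp\frac{a}{b}\,f(u)\sqrt{1-\dot f^2(u)}.$$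
   Context: $\{e_1,e_2,e_3,e_4\}$ is the standard orthonormal basis of $\mathbb{R}^4$. For the arc-length curve $l(v)$ on $S^2(1)$ set $t=l'$ and let $n$ be the unit vector with $\{t,n,l\}$ orthonormal; the spherical curvature $\kappa$ is defined by $l'=t$, $t'=\kappa n-l$, $n'=-\kappa t$. $\kappa_m$ is the curvature of the meridian $u\mapsto(f(u),g(u))$. The invariant $k$ of a surface $z(u,v)$ in $\mathbb{R}^4$ is defined as follows: with $E,F,G$ the first fundamental form coefficients, $W=\sqrt{EG-F^2}$, an orthonormal normal frame $\{e'_1,e'_2\}$ with $\{z_u,z_v,e'_1,e'_2\}$ positively oriented, and second fundamental form $\sigma(z_u,z_u)=c_{11}^1e'_1+c_{11}^2e'_2$, $\sigma(z_u,z_v)=c_{12}^1e'_1+c_{12}^2e'_2$, $\sigma(z_v,z_v)=c_{22}^1e'_1+c_{22}^2e'_2$, put $L=\frac{2}{W}(c_{11}^1c_{12}^2-c_{12}^1c_{11}^2)$, $M=\frac1W(c_{11}^1c_{22}^2-c_{22}^1c_{11}^2)$, $N=\frac2W(c_{12}^1c_{22}^2-c_{22}^1c_{12}^2)$ and $k=\frac{LN-M^2}{EG-F^2}$. (For the meridian surface this gives $k=-\kappa_m^2(u)\kappa^2(v)/f^2(u)$.) *)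

(* Defs.v *)
From HB Require Import structures.
From mathcomp Require Import all_boot all_order all_algebra.
From mathcomp Require Import all_classical all_reals all_analysis.
Set Implicit Arguments. Unset Strict Implicit. Unset Printing Implicit Defensive.
Import Order.TTheory GRing.Theory Num.Theory.
Import numFieldNormedType.Exports.
Local Open Scope ring_scope.
Local Open Scope classical_set_scope.

Section Defs.
Variable R : realType.

Definition open_interval (I : set R) : Prop :=
  (exists x, I x) /\ open I /\
  (forall x y w, I x -> I w -> x <= y -> y <= w -> I y).

Definition smooth_on (I : set R) (h : R -> R) : Prop :=
  forall (n : nat) (x : R), I x -> derivable (derive1n n h) x 1.

(* standard basis vector e_(i+1) of R^4 *)
Definition ebasis (i : 'I_4) : 'rV[R]_4 := delta_mx 0 i.

Definition dot4 (x y : 'rV[R]_4) : R := \sum_(i < 4) x 0 i * y 0 i.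

Definition vder (h : R -> 'rV[R]_4) (t : R) : 'rV[R]_4 :=
  \row_(i < 4) derive1 (fun s => h s 0 i) t.

Definition vsmooth_on (J : set R) (h : R -> 'rV[R]_4) : Prop :=
  forall i : 'I_4, smooth_on J (fun s => h s 0 i).

Definition pu (z : R -> R -> 'rV[R]_4) (u v : R) : 'rV[R]_4 :=
  vder (fun s => z s v) u.
Definition pv (z : R -> R -> 'rV[R]_4) (u v : R) : 'rV[R]_4 :=
  vder (fun s => z u s) v.

Definition det4 (a b c d : 'rV[R]_4) : R :=
  \det (\matrix_(i < 4, j < 4) (nth 0 [:: a; b; c; d] i) 0 j).

Definition oriented_normal_frame (z : R -> R -> 'rV[R]_4)
  (n1 n2 : R -> R -> 'rV[R]_4) (u v : R) : Prop :=
  dot4 (n1 u v) (n1 u v) = 1 /\ dot4 (n2 u v) (n2 u v) = 1 /\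
  dot4 (n1 u v) (n2 u v) = 0 /\
  dot4 (n1 u v) (pu z u v) = 0 /\ dot4 (n1 u v) (pv z u v) = 0 /\
  dot4 (n2 u v) (pu z u v) = 0 /\ dot4 (n2 u v) (pv z u v) = 0 /\
  0 < det4 (pu z u v) (pv z u v) (n1 u v) (n2 u v).

Definition k_inv (z : R -> R -> 'rV[R]_4) (n1 n2 : R -> R -> 'rV[R]_4)
  (u v : R) : R :=
  let zu := pu z u v in
  let zv := pv z u v in
  let E := dot4 zu zu in
  let F := dot4 zu zv in
  let G := dot4 zv zv in
  let W := Num.sqrt (E * G - F ^+ 2) in
  (* sigma(z_u,z_u), sigma(z_u,z_v), sigma(z_v,z_v): normal parts of
     z_uu, z_uv, z_vv; their coordinates in the frame {n1, n2} *)
  let zuu := pu (pu z) u v in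
  let zuv := pv (pu z) u v in
  let zvv := pv (pv z) u v in
  let c111 := dot4 zuu (n1 u v) in
  let c112 := dot4 zuu (n2 u v) in
  let c121 := dot4 zuv (n1 u v) in
  let c122 := dot4 zuv (n2 u v) in
  let c221 := dot4 zvv (n1 u v) in
  let c222 := dot4 zvv (n2 u v) in
  let L := 2 / W * (c111 * c122 - c121 * c112) in
  let M := 1 / W * (c111 * c222 - c221 * c112) in
  let N := 2 / W * (c121 * c222 - c221 * c122) in
  (L * N - M ^+ 2) / (E * G - F ^+ 2).

Definition kappa_m (f g : R -> R) (u : R) : R :=
  derive1 f u * derive1 (derive1 g) u - derive1 g u * derive1 (derive1 f) u.

Definition meridian_surface (f g : R -> R) (l : R -> 'rV[R]_4) : R -> R -> 'rV[R]_4 :=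
  fun u v => f u *: l v + g u *: ebasis 3.

End Defs.

(* Main.v *)
Require Import Defs.
From HB Require Import structures.
From mathcomp Require Import all_boot all_order all_algebra.
From mathcomp Require Import all_classical all_reals all_analysis.
From mathcomp Require Import ring lra.
Import Order.TTheory GRing.Theory Num.Theory.
Import numFieldNormedType.Exports.
Local Open Scope ring_scope.
Local Open Scope classical_set_scope.

Section H.
Variable R : realType.

Lemma derM (a b : R -> R) x : derivable a x 1 -> derivable b x 1 ->
  'D_1 (fun s => a s * b s) x = a x * 'D_1 b x + b x * 'D_1 a x.
Proof. move=> da db; exact: (deriveM da db). Qed.

Lemma derivM (a b : R -> R) x : derivable a x 1 -> derivable b x 1 ->
  derivable (fun s => a s * b s) x 1.
Proof. move=> da db; exact: (derivableM da db). Qed.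

Lemma derD (a b : R -> R) x : derivable a x 1 -> derivable b x 1 ->
  'D_1 (fun s => a s + b s) x = 'D_1 a x + 'D_1 b x.
Proof. move=> da db; exact: (deriveD da db). Qed.

Lemma derivD (a b : R -> R) x : derivable a x 1 -> derivable b x 1 ->
  derivable (fun s => a s + b s) x 1.
Proof. move=> da db; exact: (derivableD da db). Qed.

Arguments derM {a b x}.
Arguments derivM {a b x}.
Arguments derD {a b x}.
Arguments derivD {a b x}.

Lemma derL (h1 h2 : R -> R) x c d : derivable h1 x 1 -> derivable h2 x 1 ->
  derive1 (fun s => h1 s * c + h2 s * d) x = derive1 h1 x * c + derive1 h2 x * d.
Proof.
move=> d1 d2.
have e1 : derivable (fun s => h1 s * c) x 1 := derivM d1 (derivable_cst c x 1).
have e2 : derivable (fun s => h2 s * d) x 1 := derivM d2 (derivable_cst d x 1).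
rewrite derive1E (derD e1 e2) (derM d1 (derivable_cst c x 1)) (derM d2 (derivable_cst d x 1)).
rewrite !derive1E.
have z : forall k : R, 'D_1 (fun _ : R => k) x = 0 by move=> k; exact: derive_cst.
by rewrite !z !mulr0 !add0r /cst mulrC [d * _]mulrC.
Qed.

Lemma derA (h : R -> R) x c d : derivable h x 1 ->
  derive1 (fun s => c * h s + d) x = c * derive1 h x.
Proof.
move=> dh.
have e1 : derivable (fun s => c * h s) x 1 := derivM (derivable_cst c x 1) dh.
have e2 : derivable (fun s : R => d) x 1 := derivable_cst d x 1.
rewrite derive1E (derD e1 e2) (derM (derivable_cst c x 1) dh) !derive1E.
have z : forall k : R, 'D_1 (fun _ : R => k) x = 0 by move=> k; exact: derive_cst.
by rewrite !z /cst mulr0 !addr0.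
Qed.

Lemma derdot (p q : R -> 'rV[R]_4) x :
  (forall i, derivable (fun s => p s 0 i) x 1) ->
  (forall i, derivable (fun s => q s 0 i) x 1) ->
  derive1 (fun s => dot4 (p s) (q s)) x = dot4 (vder p x) (q x) + dot4 (p x) (vder q x).
Proof.
move=> dp dq; rewrite /dot4 -big_split /=.
have -> : (fun s => \sum_(i < 4) p s 0 i * q s 0 i) =
   \sum_(i < 4) (fun s => p s 0 i * q s 0 i) by rewrite fct_sumE.
rewrite derive1E derive_sum; last by move=> i; apply: derivM.
apply: eq_bigr => i _; rewrite derM // !mxE !derive1E; ring.
Qed.

Lemma near_const_der (h : R -> R) (A : set R) x c : open A -> A x ->
  (forall s, A s -> h s = c) -> derive1 h x = 0.
Proof.
move=> oA Ax hc; rewrite derive1E.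
rewrite (@near_eq_derive _ _ _ h (cst c)) ?derive_cst //.
by apply: filterS (oA x Ax) => s As; rewrite hc.
Qed.


Section Dot.
Implicit Types x y z : 'rV[R]_4.
Lemma dot4_mx x y : dot4 x y = (x *m y^T) 0 0.
Proof. by rewrite /dot4 mxE; apply: eq_bigr => i _; rewrite mxE. Qed.

Lemma dot4C x y : dot4 x y = dot4 y x.
Proof. by rewrite /dot4; apply: eq_bigr => i _; rewrite mulrC. Qed.

Lemma dot4DL x y z : dot4 (x + y) z = dot4 x z + dot4 y z.
Proof. by rewrite /dot4 -big_split; apply: eq_bigr => i _; rewrite mxE mulrDl. Qed.

Lemma dot4ZL (a : R) x z : dot4 (a *: x) z = a * dot4 x z.
Proof. by rewrite /dot4 mulr_sumr; apply: eq_bigr => i _; rewrite mxE mulrA. Qed.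

Lemma dot4NL x z : dot4 (- x) z = - dot4 x z.
Proof. by rewrite -scaleN1r dot4ZL mulN1r. Qed.

Lemma dot4DR x y z : dot4 z (x + y) = dot4 z x + dot4 z y.
Proof. by rewrite dot4C dot4DL !(dot4C z). Qed.
Lemma dot4ZR (a : R) x z : dot4 z (a *: x) = a * dot4 z x.
Proof. by rewrite dot4C dot4ZL dot4C. Qed.
Lemma dot4NR x z : dot4 z (- x) = - dot4 z x.
Proof. by rewrite dot4C dot4NL dot4C. Qed.

Lemma dot4_e3 x : dot4 x (ebasis R 3) = x 0 3.
Proof.
rewrite /dot4 (bigD1 (3 : 'I_4)) //= big1 ?addr0.
  by rewrite /ebasis mxE eqxx /= mulr1.
by move=> i hi; rewrite /ebasis mxE eqxx /= (negPf hi) mulr0.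
Qed.

Lemma parseval (b0 b1 b2 b3 : 'rV[R]_4) :
  dot4 b0 b0 = 1 -> dot4 b1 b1 = 1 -> dot4 b2 b2 = 1 -> dot4 b3 b3 = 1 ->
  dot4 b0 b1 = 0 -> dot4 b0 b2 = 0 -> dot4 b0 b3 = 0 ->
  dot4 b1 b2 = 0 -> dot4 b1 b3 = 0 -> dot4 b2 b3 = 0 ->
  forall x y, dot4 x y = dot4 x b0 * dot4 y b0 + dot4 x b1 * dot4 y b1
     + dot4 x b2 * dot4 y b2 + dot4 x b3 * dot4 y b3.
Proof.
move=> h00 h11 h22 h33 h01 h02 h03 h12 h13 h23 x y.
pose P : 'M[R]_4 := \matrix_(i < 4, j < 4) (nth 0 [:: b0; b1; b2; b3] i) 0 j.
have HP : P *m P^T = 1%:M.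
  apply/matrixP => i k; rewrite !mxE.
  have -> : \sum_j P i j * P^T j k = dot4 (nth 0 [:: b0; b1; b2; b3] i) (nth 0 [:: b0; b1; b2; b3] k).
    by apply: eq_bigr => j _; rewrite !mxE.
  case: i => [[|[|[|[|i]]]] Hi] //; case: k => [[|[|[|[|k]]]] Hk] //=;
  rewrite ?(dot4C b1 b0) ?(dot4C b2 b0) ?(dot4C b3 b0) ?(dot4C b2 b1) ?(dot4C b3 b1) ?(dot4C b3 b2) //.
have HP' : P^T *m P = 1%:M by apply: mulmx1C.
rewrite dot4_mx -[y^T]mul1mx -HP'.
have -> : x *m (P^T *m P *m y^T) = (x *m P^T) *m (y *m P^T)^T by rewrite trmx_mul trmxK !mulmxA.
rewrite mxE.
rewrite !big_ord_recr big_ord0 /= add0r.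
have E k : (x *m P^T) 0 k = dot4 x (nth 0 [:: b0; b1; b2; b3] k).
  by rewrite mxE; apply: eq_bigr => j _; rewrite !mxE.
have E' k : (y *m P^T)^T k 0 = dot4 y (nth 0 [:: b0; b1; b2; b3] k).
  by rewrite !mxE; apply: eq_bigr => j _; rewrite !mxE.
by rewrite !E !E'.
Qed.

End Dot.

Lemma core (fp gp fpp gpp f k p1 q1 r1 t1 p2 q2 r2 t2 : R) :
 fp ^+ 2 + gp ^+ 2 = 1 -> f != 0 ->
 fp * p1 + gp * q1 = 0 -> fp * p2 + gp * q2 = 0 -> f * t1 = 0 -> f * t2 = 0 ->
 p1 ^+ 2 + t1 ^+ 2 + r1 ^+ 2 + q1 ^+ 2 = 1 -> p2 ^+ 2 + t2 ^+ 2 + r2 ^+ 2 + q2 ^+ 2 = 1 ->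
 p1 * p2 + t1 * t2 + r1 * r2 + q1 * q2 = 0 ->
 ((fpp * p1 + gpp * q1) * (f * (k * r2 - p2)) - (f * (k * r1 - p1)) * (fpp * p2 + gpp * q2)) ^+ 2
   = f ^+ 2 * k ^+ 2 * (fp * gpp - gp * fpp) ^+ 2.
Proof.
move=> h1 hf e1 e2 et1 et2 n1 n2 n12.
have t10 : t1 = 0 by move: et1 => /eqP; rewrite mulf_eq0 (negPf hf) /= => /eqP.
have t20 : t2 = 0 by move: et2 => /eqP; rewrite mulf_eq0 (negPf hf) /= => /eqP.
subst t1 t2.
set s1 := - gp * p1 + fp * q1. set s2 := - gp * p2 + fp * q2.
have hp1 : p1 = - gp * s1.
  rewrite /s1; transitivity (p1 * (fp ^+ 2 + gp ^+ 2) - fp * (fp * p1 + gp * q1)); last by ring.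
  by rewrite h1 e1; ring.
have hq1 : q1 = fp * s1.
  rewrite /s1; transitivity (q1 * (fp ^+ 2 + gp ^+ 2) - gp * (fp * p1 + gp * q1)); last by ring.
  by rewrite h1 e1; ring.
have hp2 : p2 = - gp * s2.
  rewrite /s2; transitivity (p2 * (fp ^+ 2 + gp ^+ 2) - fp * (fp * p2 + gp * q2)); last by ring.
  by rewrite h1 e2; ring.
have hq2 : q2 = fp * s2.
  rewrite /s2; transitivity (q2 * (fp ^+ 2 + gp ^+ 2) - gp * (fp * p2 + gp * q2)); last by ring.
  by rewrite h1 e2; ring.
move: n1 n2 n12; rewrite hp1 hq1 hp2 hq2 => n1 n2 n12.
have m1 : s1 ^+ 2 + r1 ^+ 2 = 1.
  rewrite -n1; transitivity (s1 ^+ 2 * 1 + r1 ^+ 2); first by ring.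
  by rewrite -h1; ring.
have m2 : s2 ^+ 2 + r2 ^+ 2 = 1.
  rewrite -n2; transitivity (s2 ^+ 2 * 1 + r2 ^+ 2); first by ring.
  by rewrite -h1; ring.
have m12 : s1 * s2 + r1 * r2 = 0.
  rewrite -n12; transitivity (s1 * s2 * 1 + r1 * r2); first by ring.
  by rewrite -h1; ring.
have key : (s1 * r2 - r1 * s2) ^+ 2 = 1.
  transitivity ((s1 ^+ 2 + r1 ^+ 2) * (s2 ^+ 2+r2 ^+ 2) - (s1 * s2+r1 * r2) ^+ 2); first by ring.
  by rewrite m1 m2 m12; ring.
transitivity (f ^+ 2 * k ^+ 2 * (fp * gpp - gp * fpp) ^+ 2 * (s1 * r2 - r1 * s2) ^+ 2). 
  by ring.
by rewrite key; ring.
Qed.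

Lemma fin_alg (a b c d X F K : R) : F != 0 -> X ^+ 2 = F ^+ 2 * K ->
  (2 / Num.sqrt (1 * F ^+ 2 - 0 ^+ 2) * (a * 0 - 0 * b) *
   (2 / Num.sqrt (1 * F ^+ 2 - 0 ^+ 2) * (0 * c - d * 0)) -
   (1 / Num.sqrt (1 * F ^+ 2 - 0 ^+ 2) * X) ^+ 2) / (1 * F ^+ 2 - 0 ^+ 2)
  = - K / F ^+ 2.
Proof.
move=> hF hX.
have e1 : 1 * F ^+ 2 - 0 ^+ 2 = F ^+ 2 by rewrite mul1r expr0n /= subr0.
rewrite e1 !mulr0 !mul0r subrr !mulr0 sub0r exprMn hX.
have hW : Num.sqrt (F ^+ 2) ^+ 2 = F ^+ 2 by rewrite sqr_sqrtr // sqr_ge0.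
rewrite expr_div_n expr1n hW.
have hF2 : F ^+ 2 != 0 by rewrite sqrf_eq0.
by field.
Qed.

Section Surf.
Variables (f g : R -> R) (l : R -> 'rV[R]_4).
Let z := meridian_surface f g l.
Let e := ebasis R 3.

Lemma z_entry u v i : z u v 0 i = f u * l v 0 i + g u * e 0 i.
Proof. by rewrite /z /meridian_surface !mxE. Qed.

Lemma pu_z u v : derivable f u 1 -> derivable g u 1 ->
  pu z u v = derive1 f u *: l v + derive1 g u *: e.
Proof.
move=> df dg; apply/rowP => i; rewrite /pu /vder !mxE.
have -> : (fun s => z s v 0 i) = (fun s => f s * l v 0 i + g s * e 0 i).
  by apply/funext => s; rewrite z_entry.
by rewrite derL // /e /ebasis mxE.
Qed.

Lemma pv_z u v : (forall i, derivable (fun s => l s 0 i) v 1) ->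
  pv z u v = f u *: vder l v.
Proof.
move=> dl; apply/rowP => i; rewrite /pv /vder !mxE.
have -> : (fun s => z u s 0 i) = (fun s => f u * l s 0 i + g u * e 0 i).
  by apply/funext => s; rewrite z_entry.
by rewrite derA // /e /ebasis ?mxE.
Qed.

Lemma puu_z (I : set R) u v : open I -> I u -> smooth_on I f -> smooth_on I g ->
  pu (pu z) u v = derive1 (derive1 f) u *: l v + derive1 (derive1 g) u *: e.
Proof.
move=> oI Iu sf sg; apply/rowP => i; rewrite /pu [vder (fun s => vder _ _) u]/vder !mxE.
rewrite derive1E (@near_eq_derive _ _ _ _ (fun s => derive1 f s * l v 0 i + derive1 g s * e 0 i)).
  rewrite -derive1E derL; first by rewrite /e /ebasis mxE.
  exact: (sf 1%N u Iu). exact: (sg 1%N u Iu).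
apply: filterS (oI u Iu) => s Is.
by rewrite -/(pu z s v) pu_z ?mxE //; [exact: (sf 0%N s Is)|exact: (sg 0%N s Is)].
Qed.

Lemma puv_z (I : set R) u v : I u -> smooth_on I f -> smooth_on I g ->
  (forall i, derivable (fun s => l s 0 i) v 1) ->
  pv (pu z) u v = derive1 f u *: vder l v.
Proof.
move=> Iu sf sg dl; apply/rowP => i; rewrite /pv [vder (fun s => pu z u s) v]/vder !mxE.
have -> : (fun s => pu z u s 0 i) = (fun s => derive1 f u * l s 0 i + derive1 g u * e 0 i).
  apply/funext => s; rewrite pu_z ?mxE //; [exact: (sf 0%N u Iu)|exact: (sg 0%N u Iu)].
by rewrite derA.
Qed.

Lemma pvv_z (J : set R) u v : open J -> J v -> vsmooth_on J l ->
  pv (pv z) u v = f u *: vder (vder l) v.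
Proof.
move=> oJ Jv sl; apply/rowP => i; rewrite /pv [vder (fun s => vder _ _) v]/vder !mxE.

have -> : (fun s => vder l s 0 i) = derive1 (fun s => l s 0 i).
  by apply/funext => s; rewrite /vder mxE.
rewrite derive1E (@near_eq_derive _ _ _ _ (fun s => f u * derive1 (fun s => l s 0 i) s + 0)).
  by rewrite -derive1E derA //; exact: (sl i 1%N v Jv).
apply: filterS (oJ v Jv) => s Js.
rewrite -/(pv z u s) pv_z ?mxE ?addr0 //.
by move=> j; exact: (sl j 0%N s Js).
Qed.

Lemma k_val (I J : set R) (n : R -> 'rV[R]_4) (kappa : R -> R)
  (n1 n2 : R -> R -> 'rV[R]_4) u v :
  open I -> I u -> smooth_on I f -> smooth_on I g ->
  derive1 f u ^+ 2 + derive1 g u ^+ 2 = 1 -> f u != 0 ->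
  open J -> J v -> vsmooth_on J l ->
  (forall s, J s -> l s 0 3 = 0) -> (forall s, J s -> dot4 (l s) (l s) = 1) ->
  dot4 (vder l v) (vder l v) = 1 -> n v 0 3 = 0 -> dot4 (n v) (n v) = 1 ->
  dot4 (n v) (vder l v) = 0 -> dot4 (n v) (l v) = 0 ->
  vder (vder l) v = kappa v *: n v - l v ->
  oriented_normal_frame z n1 n2 u v ->
  k_inv z n1 n2 u v = - (kappa_m f g u ^+ 2 * kappa v ^+ 2) / f u ^+ 2.
Proof.
move=> oI Iu sf sg hfg hf0 oJ Jv sl hl3 hl1 hlt hn3 hnn hnt hnl ht'
  [h11 [h22 [h12 [h1u [h1v [h2u [h2v _]]]]]]].
have df : derivable f u 1 := sf 0%N u Iu.
have dg : derivable g u 1 := sg 0%N u Iu.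
have dl : forall i, derivable (fun s => l s 0 i) v 1 := fun i => sl i 0%N v Jv.
have Hu := pu_z u v df dg.
have Hv := pv_z u v dl.
have Huu := @puu_z I u v oI Iu sf sg.
have Huv := @puv_z I u v Iu sf sg dl.
have Hvv := @pvv_z J u v oJ Jv sl.
have eEE : dot4 e e = 1 by rewrite /e dot4_e3 /ebasis mxE.
have eLE : dot4 (l v) e = 0 by rewrite dot4_e3 hl3.
have eNE : dot4 (n v) e = 0 by rewrite dot4_e3.
have eTE : dot4 (vder l v) e = 0.
  rewrite dot4_e3 /vder mxE.
  exact: (near_const_der _ _ _ 0 oJ Jv hl3).
have eLT : dot4 (l v) (vder l v) = 0.
  have H1 := derdot l l v dl dl.
  have H2 := near_const_der (fun s => dot4 (l s) (l s)) J v 1 oJ Jv hl1.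
  have H3 := etrans (esym H2) H1.
  move: H3; rewrite (dot4C (vder l v)) -mulr2n -mulr_natl => /esym/eqP.
  by rewrite mulf_eq0 pnatr_eq0 /= => /eqP.
have P := @parseval (l v) (vder l v) (n v) e (hl1 v Jv) hlt hnn eEE eLT (etrans (dot4C _ _) hnl) eLE
   (etrans (dot4C _ _) hnt) eTE eNE.
have Tn1 : dot4 (vder l v) (n1 u v) = 0.
  move: h1v; rewrite Hv dot4ZR dot4C => /eqP; rewrite mulf_eq0 (negPf hf0) /=.
  by move/eqP.
have Tn2 : dot4 (vder l v) (n2 u v) = 0.
  move: h2v; rewrite Hv dot4ZR dot4C => /eqP; rewrite mulf_eq0 (negPf hf0) /=.
  by move/eqP.
have hE : dot4 (pu z u v) (pu z u v) = 1.
  rewrite Hu !dot4DL !dot4ZL !dot4DR !dot4ZR (hl1 v Jv) eLE (dot4C e) eLE eEE.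
  by rewrite !mulr0 !mulr1 !addr0 !add0r -hfg !expr2.
have hF : dot4 (pu z u v) (pv z u v) = 0.
  by rewrite Hu Hv !dot4DL !dot4ZL !dot4ZR eLT (dot4C e) eTE; ring.
have hG : dot4 (pv z u v) (pv z u v) = f u ^+ 2.
  by rewrite Hv !dot4ZL !dot4ZR hlt mulr1 expr2.
have h121 : dot4 (pv (pu z) u v) (n1 u v) = 0 by rewrite Huv dot4ZL Tn1 mulr0.
have h122 : dot4 (pv (pu z) u v) (n2 u v) = 0 by rewrite Huv dot4ZL Tn2 mulr0.
have hX : (dot4 (pu (pu z) u v) (n1 u v) * dot4 (pv (pv z) u v) (n2 u v) -
           dot4 (pv (pv z) u v) (n1 u v) * dot4 (pu (pu z) u v) (n2 u v)) ^+ 2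
         = f u ^+ 2 * (kappa_m f g u ^+ 2 * kappa v ^+ 2).
  have e1 : derive1 f u * dot4 (l v) (n1 u v) + derive1 g u * dot4 e (n1 u v) = 0.
    by move: h1u; rewrite Hu dot4DR !dot4ZR !(dot4C (n1 u v)).
  have e2 : derive1 f u * dot4 (l v) (n2 u v) + derive1 g u * dot4 e (n2 u v) = 0.
    by move: h2u; rewrite Hu dot4DR !dot4ZR !(dot4C (n2 u v)).
  have et1 : f u * dot4 (vder l v) (n1 u v) = 0 by rewrite Tn1 mulr0.
  have et2 : f u * dot4 (vder l v) (n2 u v) = 0 by rewrite Tn2 mulr0.
  have m1 : dot4 (l v) (n1 u v) ^+ 2 + dot4 (vder l v) (n1 u v) ^+ 2 +
            dot4 (n v) (n1 u v) ^+ 2 + dot4 e (n1 u v) ^+ 2 = 1.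
    by rewrite -h11 (P (n1 u v) (n1 u v)) !expr2 !(dot4C (n1 u v)).
  have m2 : dot4 (l v) (n2 u v) ^+ 2 + dot4 (vder l v) (n2 u v) ^+ 2 +
            dot4 (n v) (n2 u v) ^+ 2 + dot4 e (n2 u v) ^+ 2 = 1.
    by rewrite -h22 (P (n2 u v) (n2 u v)) !expr2 !(dot4C (n2 u v)).
  have m12 : dot4 (l v) (n1 u v) * dot4 (l v) (n2 u v) +
             dot4 (vder l v) (n1 u v) * dot4 (vder l v) (n2 u v) +
             dot4 (n v) (n1 u v) * dot4 (n v) (n2 u v) +
             dot4 e (n1 u v) * dot4 e (n2 u v) = 0.
    by rewrite -h12 (P (n1 u v) (n2 u v)) !(dot4C (n1 u v)) !(dot4C (n2 u v)).
  have C := core _ _ (derive1 (derive1 f) u) (derive1 (derive1 g) u) _ (kappa v)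
     _ _ _ _ _ _ _ _ hfg hf0 e1 e2 et1 et2 m1 m2 m12.
  rewrite Huu Hvv ht' !dot4ZL !dot4DL !dot4ZL !dot4NL.
  rewrite C.
  by rewrite /kappa_m -mulrA (mulrC (kappa v ^+ 2)).
rewrite /k_inv; cbv zeta.
move: hE hF hG h121 h122 hX.
generalize (dot4 (pu z u v) (pu z u v)) (dot4 (pu z u v) (pv z u v))
  (dot4 (pv z u v) (pv z u v)) (dot4 (pv (pu z) u v) (n1 u v))
  (dot4 (pv (pu z) u v) (n2 u v)) (dot4 (pu (pu z) u v) (n1 u v))
  (dot4 (pu (pu z) u v) (n2 u v)) (dot4 (pv (pv z) u v) (n1 u v))
  (dot4 (pv (pv z) u v) (n2 u v)).
move=> E F G c121 c122 c111 c112 c221 c222 -> -> -> -> -> hX.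
by rewrite (fin_alg _ _ _ _ _ _ _ hf0 hX) mulNr.
Qed.

End Surf.

Lemma der_cont (h : R -> R) x : derivable h x 1 -> {for x, continuous h}.
Proof. by move=> d; apply: differentiable_continuous; apply/derivable1_diffP. Qed.

Lemma derivB (a b : R -> R) x : derivable a x 1 -> derivable b x 1 ->
  derivable (fun s => a s - b s) x 1.
Proof. by move=> da db; apply: (derivD da); apply: derivableN. Qed.

Lemma derivable_dot (p q : R -> 'rV[R]_4) x :
  (forall i, derivable (fun s => p s 0 i) x 1) ->
  (forall i, derivable (fun s => q s 0 i) x 1) ->
  derivable (fun s => dot4 (p s) (q s)) x 1.
Proof.
move=> dp dq; rewrite /dot4.
have -> : (fun s => \sum_(i < 4) p s 0 i * q s 0 i) =
   \sum_(i < 4) (fun s => p s 0 i * q s 0 i) by rewrite fct_sumE.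
by apply: derivable_sum => i; apply: derivM.
Qed.

Lemma derSq (h1 h2 : R -> R) x : derivable h1 x 1 -> derivable h2 x 1 ->
  derive1 (fun s => h1 s ^+ 2 + h2 s ^+ 2) x =
  2 * (h1 x * derive1 h1 x + h2 x * derive1 h2 x).
Proof.
move=> d1 d2.
have -> : (fun s => h1 s ^+ 2 + h2 s ^+ 2) = (fun s => h1 s * h1 s + h2 s * h2 s).
  by apply/funext => s; rewrite !expr2.
rewrite derive1E (derD (derivM d1 d1) (derivM d2 d2)) (derM d1 d1) (derM d2 d2).
rewrite -!derive1E; ring.
Qed.

Lemma near_const_der' (h : R -> R) x c :
  (\forall s \near x, h s = c) -> derive1 h x = 0.
Proof.
move=> hc; rewrite derive1E.
by rewrite (@near_eq_derive _ _ _ h (cst c)) ?derive_cst.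
Qed.

Lemma sq_cases (x y : R) : x ^+ 2 = y ^+ 2 -> x = - y \/ x = y.
Proof.
move/eqP; rewrite -subr_eq0 subr_sqr mulf_eq0 => /orP [] /eqP H.
  by right; lra.
by left; lra.
Qed.

Lemma alg_fwd (fp gp fpp gpp f a b : R) : fp ^+ 2 + gp ^+ 2 = 1 ->
  fp * fpp + gp * gpp = 0 -> b != 0 ->
  (fp * gpp - gp * fpp) ^+ 2 * b ^+ 2 = a ^+ 2 * f ^+ 2 ->
  fpp ^+ 2 = (a / b * f * Num.sqrt (1 - fp ^+ 2)) ^+ 2.
Proof.
move=> h1 h2 hb h3.
have km : (fp * gpp - gp * fpp) * gp = - fpp.
  apply/eqP; rewrite -subr_eq0 opprK; apply/eqP.
  transitivity (fp * (fp * fpp + gp * gpp) - fpp * (fp ^+ 2 + gp ^+ 2) + fpp); first by ring.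
  by rewrite h1 h2; ring.
have g2 : 1 - fp ^+ 2 = gp ^+ 2 by rewrite -h1; ring.
rewrite g2 !exprMn sqr_sqrtr ?sqr_ge0 //.
have -> : fpp ^+ 2 = (fp * gpp - gp * fpp) ^+ 2 * gp ^+ 2.
  by rewrite -exprMn km sqrrN.
have b2 : b ^+ 2 != 0 by rewrite sqrf_eq0.
have -> : (fp * gpp - gp * fpp) ^+ 2 = a ^+ 2 * f ^+ 2 / b ^+ 2.
  by rewrite -h3 mulfK.
by rewrite exprVn; field.
Qed.

Lemma alg_bwd (fp gp fpp gpp f c : R) : fp ^+ 2 + gp ^+ 2 = 1 ->
  fp * fpp + gp * gpp = 0 ->
  fpp ^+ 2 = (c * f * Num.sqrt (1 - fp ^+ 2)) ^+ 2 ->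
  ((fp * gpp - gp * fpp) ^+ 2 - c ^+ 2 * f ^+ 2) * gp ^+ 2 = 0.
Proof.
move=> h1 h2 h3.
have km : (fp * gpp - gp * fpp) * gp = - fpp.
  apply/eqP; rewrite -subr_eq0 opprK; apply/eqP.
  transitivity (fp * (fp * fpp + gp * gpp) - fpp * (fp ^+ 2 + gp ^+ 2) + fpp); first by ring.
  by rewrite h1 h2; ring.
have g2 : 1 - fp ^+ 2 = gp ^+ 2 by rewrite -h1; ring.
move: h3; rewrite g2 !exprMn sqr_sqrtr ?sqr_ge0 // => h3.
rewrite mulrBl -exprMn km sqrrN h3; ring.
Qed.

Lemma near_zero_of (A : set R) (H h : R -> R) x : open A -> A x ->
  derivable H x 1 -> H x != 0 -> (forall s, A s -> H s * h s ^+ 2 = 0) ->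
  derive1 h x = 0.
Proof.
move=> oA Ax dH Hne rel.
have nz : \forall s \near x, H s != 0.
  have := cvgr_neq0 (H x) (der_cont _ _ dH) Hne.
  move=> K; exact: (K (nbhs_filter _)).
apply: (near_const_der' _ _ 0).
have NN := @filterI _ _ (nbhs_filter _) _ _ (oA x Ax) nz.
apply: (@filterS _ _ (nbhs_filter _) _ _ _ NN) => s [As Hs].
by move: (rel s As) => /eqP; rewrite mulf_eq0 (negPf Hs) /= sqrf_eq0 => /eqP.
Qed.

End H.

Theorem proposition5p3 (R : realType) (I J : set R) (f g : R -> R)
  (l n : R -> 'rV[R]_4) (kappa : R -> R) (a : R)
  (* f, g smooth on I, f'^2 + g'^2 = 1, f nowhere zero *)
  (hI : open_interval I) (hf : smooth_on I f) (hg : smooth_on I g)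
  (hfg : forall u, I u -> derive1 f u ^+ 2 + derive1 g u ^+ 2 = 1)
  (hf0 : forall u, I u -> f u != 0)
  (* l : J -> S^2(1) in span{e1,e2,e3}, smooth, arc-length parametrized *)
  (hJ : open_interval J) (hl : vsmooth_on J l)
  (hl3 : forall v, J v -> l v 0 3 = 0)
  (hl1 : forall v, J v -> dot4 (l v) (l v) = 1)
  (hlt : forall v, J v -> dot4 (vder l v) (vder l v) = 1)
  (* spherical Frenet frame {t, n, l} and spherical curvature kappa *)
  (hn3 : forall v, J v -> n v 0 3 = 0)
  (hnn : forall v, J v -> dot4 (n v) (n v) = 1)
  (hnt : forall v, J v -> dot4 (n v) (vder l v) = 0)
  (hnl : forall v, J v -> dot4 (n v) (l v) = 0)
  (ht' : forall v, J v -> vder (vder l) v = kappa v *: n v - l v)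
  (hn' : forall v, J v -> vder n v = - (kappa v *: vder l v))
  (hnd : forall v, J v -> forall i : 'I_4, derivable (fun s => n s 0 i) v 1)
  (* general class *)
  (hgen : forall u v, I u -> J v -> kappa_m f g u * kappa v != 0)
  (ha : a != 0)
  (* any positively oriented orthonormal normal frame of M^2 *)
  (n1 n2 : R -> R -> 'rV[R]_4)
  (hframe : forall u v, I u -> J v ->
     oriented_normal_frame (meridian_surface f g l) n1 n2 u v) :
  (forall u v, I u -> J v ->
     k_inv (meridian_surface f g l) n1 n2 u v = - a ^+ 2)
  <->
  (exists b : R, b != 0 /\ (forall v, J v -> kappa v = b) /\
     (forall u, I u ->
        derive1 (derive1 f) u = - (a / b) * f u * Num.sqrt (1 - derive1 f u ^+ 2) \/
        derive1 (derive1 f) u = (a / b) * f u * Num.sqrt (1 - derive1 f u ^+ 2))).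
Proof.

have oI : open I := hI.2.1.
have oJ : open J := hJ.2.1.
have Kv : forall u v, I u -> J v -> k_inv (meridian_surface f g l) n1 n2 u v =
    - (kappa_m f g u ^+ 2 * kappa v ^+ 2) / f u ^+ 2.
  move=> u v Iu Jv.
  exact: (@k_val R f g l I J n kappa n1 n2 u v oI Iu hf hg (hfg u Iu) (hf0 u Iu)
    oJ Jv hl hl3 hl1 (hlt v Jv) (hn3 v Jv) (hnn v Jv) (hnt v Jv) (hnl v Jv)
    (ht' v Jv) (hframe u v Iu Jv)).
have [u0 Iu0] := hI.1.
have [v0 Jv0] := hJ.1.
have kap0 : forall v, J v -> kappa v != 0.
  by move=> v Jv; move: (hgen u0 v Iu0 Jv); rewrite mulf_eq0 negb_or => /andP [].
have km0 : forall u, I u -> kappa_m f g u != 0.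
  by move=> u Iu; move: (hgen u v0 Iu Jv0); rewrite mulf_eq0 negb_or => /andP [].
have dd : forall u, I u -> derive1 f u * derive1 (derive1 f) u +
    derive1 g u * derive1 (derive1 g) u = 0.
  move=> u Iu.
  have H1 := @derSq R (derive1 f) (derive1 g) u (hf 1%N u Iu) (hg 1%N u Iu).
  have H2 := @near_const_der R (fun s => derive1 f s ^+ 2 + derive1 g s ^+ 2) I u 1 oI Iu hfg.
  have H3 := etrans (esym H2) H1.
  by move: H3 => /esym/eqP; rewrite mulf_eq0 pnatr_eq0 /= => /eqP.
split.
  move=> Hk.
  have Heq : forall u v, I u -> J v ->
      kappa_m f g u ^+ 2 * kappa v ^+ 2 = a ^+ 2 * f u ^+ 2.
    move=> u v Iu Jv; have := Hk u v Iu Jv; rewrite Kv // mulNr => /oppr_inj H.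
    have F2 : f u ^+ 2 != 0 by rewrite sqrf_eq0 hf0.
    by rewrite -(divfK F2 (_ * _)) H.
  exists (kappa v0); split; first exact: kap0.
  split.
    move=> v Jv.
    have sq : kappa v ^+ 2 = kappa v0 ^+ 2.
      have K2 : kappa_m f g u0 ^+ 2 != 0 by rewrite sqrf_eq0 km0.
      apply: (mulfI K2); by rewrite Heq // Heq.
    case: (@sq_cases R _ _ sq) => // Hneg; exfalso.
    pose K' := fun s => dot4 (vder (vder l) s) (n s).
    have K'E : forall s, J s -> K' s = kappa s.
      move=> s Js; rewrite /K' ht' // dot4DL dot4ZL dot4NL hnn // (@dot4C R (l s)) hnl //.
      by rewrite mulr1 subr0.
    have K'd : forall s, J s -> derivable K' s 1.
      move=> s Js; apply: derivable_dot => i; last exact: hnd.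
      have -> : (fun r => vder (vder l) r 0 i) = derive1 (derive1 (fun r => l r 0 i)).
        apply/funext => r; rewrite /vder mxE; congr derive1; apply/funext => r'.
        by rewrite mxE.
      exact: (hl i 2%N s Js).
    have key : forall x y, J x -> J y -> x <= y -> K' x * K' y < 0 -> False.
      move=> x y Jx Jy xy neg.
      have [c cxy Kc] : exists2 c, c \in `[x, y]%R & K' c = 0.
        apply: (@IVT R K' x y 0 xy).
          apply: continuous_in_subspaceT => c; rewrite inE /= in_itv /= => /andP [h1 h2].
          apply: der_cont; apply: K'd; exact: (hJ.2.2 x c y Jx Jy h1 h2).
        rewrite ge_min le_max.
        case: (leP 0 (K' x)) => hx.
          have hy : K' y <= 0 by nra.
          by rewrite hy orbT.
        have hy : 0 <= K' y by nra.
        by rewrite (ltW hx) hy.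
      move: cxy; rewrite in_itv /= => /andP [h1 h2].
      have Jc : J c := hJ.2.2 x c y Jx Jy h1 h2.
      by move: (kap0 c Jc); rewrite -K'E // Kc eqxx.
    have neg : K' v0 * K' v < 0.
      by rewrite K'E // K'E // Hneg mulrN oppr_lt0 -expr2 lt0r sqrf_eq0 kap0 //= sqr_ge0.
    case: (leP v0 v) => hvv.
      exact: (key v0 v Jv0 Jv hvv neg).
    by apply: (key v v0 Jv Jv0 (ltW hvv)); rewrite mulrC.
  move=> u Iu.
  have := @alg_fwd R _ _ _ _ (f u) a (kappa v0) (hfg u Iu) (dd u Iu) (kap0 v0 Jv0) (Heq u v0 Iu Jv0).
  move/(@sq_cases R) => [H|H]; [left|right]; rewrite H //.
  by rewrite !mulNr.
move=> [b [b0 [hk hode]]].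
have derivSq : forall (h : R -> R) x, derivable h x 1 -> derivable (fun s => h s ^+ 2) x 1.
  move=> h x dh.
  have -> : (fun s => h s ^+ 2) = (fun s => h s * h s) by apply/funext => s; rewrite expr2.
  exact: derivM.
have H0 : forall u, I u -> kappa_m f g u ^+ 2 = (a / b) ^+ 2 * f u ^+ 2.
  have rel : forall s, I s ->
      (kappa_m f g s ^+ 2 - (a / b) ^+ 2 * f s ^+ 2) * derive1 g s ^+ 2 = 0.
    move=> s Is; apply: (@alg_bwd R _ _ _ _ (f s) (a / b) (hfg s Is) (dd s Is)).
    by case: (hode s Is) => ->; rewrite ?mulNr ?sqrrN.
  move=> u Iu; apply/eqP; rewrite -subr_eq0; apply/negPn/negP => Hne.
  pose H := fun s => kappa_m f g s ^+ 2 - (a / b) ^+ 2 * f s ^+ 2.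
  have dH : derivable H u 1.
    have d0 : derivable f u 1 := hf 0%N u Iu.
    have d1 : derivable (derive1 f) u 1 := hf 1%N u Iu.
    have d2 : derivable (derive1 (derive1 f)) u 1 := hf 2%N u Iu.
    have e1 : derivable (derive1 g) u 1 := hg 1%N u Iu.
    have e2 : derivable (derive1 (derive1 g)) u 1 := hg 2%N u Iu.
    have A1 := @derivM R (derive1 f) (derive1 (derive1 g)) u d1 e2.
    have A2 := @derivM R (derive1 g) (derive1 (derive1 f)) u e1 d2.
    have A3 := @derivB R _ _ u A1 A2.
    have A4 := derivSq _ u A3.
    have A5 := @derivM R (fun _ => (a / b) ^+ 2) (fun s => f s ^+ 2) u
       (derivable_cst _ _ _) (derivSq f u d0).
    exact: (@derivB R _ _ u A4 A5).
  have g2 : derive1 (derive1 g) u = 0 := @near_zero_of R I H (derive1 g) u oI Iu dH Hne rel.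
  have g1 : derive1 g u = 0.
    by move: (rel u Iu) => /eqP; rewrite mulf_eq0 (negPf Hne) /= sqrf_eq0 => /eqP.
  have f2 : derive1 f u ^+ 2 = 1 by rewrite -(hfg u Iu) g1 expr0n /= addr0.
  have fpp : derive1 (derive1 f) u = 0.
    move: (dd u Iu); rewrite g1 mul0r addr0 => /eqP; rewrite mulf_eq0 => /orP [] /eqP //.
    by move=> hf'; move: f2; rewrite hf' expr0n /= => /eqP; rewrite eq_sym oner_eq0.
  by move: (km0 u Iu); rewrite /kappa_m g2 g1 fpp mulr0 mul0r subr0 eqxx.
move=> u v Iu Jv; rewrite Kv // hk // H0 //.
have fu := hf0 u Iu.
by rewrite expr_div_n; field; rewrite fu b0.
Qed.
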